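(* Let $A\ge 3$, $N\ge 2$, and let $w:\mathbf{Prof}\to\mathbf{Pref}$ be a social welfare function satisfying IIA with pairwise comparison functions $s_1,\dots,s_A:\{0,e,1\}^N\to\{0,e,1\}$, and satisfying Unanimity. If $w$ satisfies Unrestricted Domain, then for every $j\in\{1,\dots,A\}$ and every $r\in\{0,1\}^N$ we have $s_j(r)\in\{0,1\}$.
   Context: Let $\mathcal{A}=\{a_1,\dots,a_A\}$ and $N\ge 2$ individuals; $e$ is a third symbol distinct from $0,1$. Let $\sigma(i)=i+1$ for $i<A$, $\sigma(A)=1$. A preference relation is $t\in\{0,e,1\}^A$, where $t_i$ records $a_i$ versus $a_{\sigma(i)}$: $0$ means $a_i\prec a_{\sigma(i)}$, $1$ means $a_{\sigma(i)}\prec a_i$, $e$ means $a_i\sim a_{\sigma(i)}$. It corresponds to a weak order if some complete transitive relation on $\mathcal{A}$ realizes all these comparisons; otherwise it is a preference cycle. $\mathbf{Pref}=\{0,e,1\}^A$. A profile is an $A\times N$ matrix over $\{0,e,1\}$ whose every column corresponds to a weak order; $\mathbf{Prof}$ is the set of profiles, written in row form $(r_1,\dots,r_A)$ with $r_j\in\{0,e,1\}^N$ (row $j$ lists all individuals' comparisons of $a_j$ versus $a_{\sigma(j)}$). A social welfare function is a map $w:\mathbf{Prof}\to\mathbf{Pref}$. It satisfies IIA if there are functions $s_1,\dots,s_A:\{0,e,1\}^N\to\{0,e,1\}$ (pairwise comparison functions) with $w(r_1,\dots,r_A)=(s_1(r_1),\dots,s_A(r_A))$ for every profile. It satisfies Unanimity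 if $s_j(\Delta x)=x$ for all $j$ and $x\in\{0,1\}$, where $\Delta x=(x,\dots,x)\in\{0,e,1\}^N$. It satisfies Unrestricted Domain if $w(m)$ corresponds to a weak order for every profile $m$. *)

(* Defs.v *)
From mathcomp Require Import all_boot.
Set Implicit Arguments. Unset Strict Implicit. Unset Printing Implicit Defensive.

Inductive sym := s0 | se | s1.

(* sigma : a_i |-> a_{i+1}, a_A |-> a_1 (0-indexed: i |-> i+1 mod A). *)
Definition sigma (A : nat) (i : 'I_A) : 'I_A :=
  match A as n return 'I_n -> 'I_n with
  | 0 => fun i => i
  | n.+1 => fun i => ordS i
  end i.

(* A preference relation: t : 'I_A -> sym, t i compares a_i with a_(sigma i). *)
Definition pref (A : nat) := 'I_A -> sym.

(* R x y reads "x is weakly below y" (x ≼ y). *)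
Definition realizes (A : nat) (R : 'I_A -> 'I_A -> Prop) (t : pref A) : Prop :=
  forall i : 'I_A,
    match t i with
    | s0 => R i (sigma i) /\ ~ R (sigma i) i
    | s1 => R (sigma i) i /\ ~ R i (sigma i)
    | se => R i (sigma i) /\ R (sigma i) i
    end.

Definition is_weak_order (A : nat) (t : pref A) : Prop :=
  exists R : 'I_A -> 'I_A -> Prop,
    (forall x y, R x y \/ R y x) /\
    (forall x y z, R x y -> R y z -> R x z) /\
    realizes R t.

(* Profiles in row form: m j k = individual k's comparison of a_j vs a_(sigma j). *)
Definition profile (A N : nat) := 'I_A -> 'I_N -> sym.

Definition is_profile (A N : nat) (m : profile A N) : Prop :=
  forall k : 'I_N, is_weak_order (fun j => m j k).

Definition IIA (A N : nat) (w : profile A N -> pref A)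
    (s : 'I_A -> ('I_N -> sym) -> sym) : Prop :=
  forall m, is_profile m -> forall j, w m j = s j (m j).

Definition Unanimity (A N : nat) (s : 'I_A -> ('I_N -> sym) -> sym) : Prop :=
  forall j, s j (fun _ => s0) = s0 /\ s j (fun _ => s1) = s1.

Definition UnrestrictedDomain (A N : nat) (w : profile A N -> pref A) : Prop :=
  forall m, is_profile m -> is_weak_order (w m).

Definition binary (x : sym) : Prop := x = s0 \/ x = s1.

(* Main.v *)
Require Import Defs.
From mathcomp Require Import all_boot.
From mathcomp Require Import zify.
Set Implicit Arguments. Unset Strict Implicit.

Lemma sigmaE (A : nat) (x : 'I_A) :
  (x.+1 < A /\ nat_of_ord (sigma x) = x.+1) \/ (x.+1 = A /\ nat_of_ord (sigma x) = 0).
Proof.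
destruct A as [|n]; first by case: x.
rewrite /sigma /=.
case: (ltnP x.+1 n.+1) => H.
  by left; split => //; rewrite modn_small.
right; have E : x.+1 = n.+1 by have := ltn_ord x; lia.
by split => //; rewrite E modnn.
Qed.

Lemma iter_sigma (A : nat) (x : 'I_A) k : k < A ->
  let v := nat_of_ord (iter k (@sigma A) x) in
  (x + k < A /\ v = x + k) \/ (A <= x + k /\ v = x + k - A).
Proof.
elim: k => [|k IH] Hk /=.
  by left; rewrite addn0.
have := IH (ltnW Hk) => /= IH'.
have := @sigmaE A (iter k (@sigma A) x). have := ltn_ord x. lia.
Qed.

Lemma cyc (A : nat) (Q : 'I_A -> 'I_A -> Prop) :
  (forall x, Q x x) -> (forall x y z, Q x y -> Q y z -> Q x z) ->
  (forall i, Q i (sigma i)) -> forall i, Q (sigma i) i.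
Proof.
move=> Hr Ht Hs i.
have Hk : forall k x, Q x (iter k (@sigma A) x).
  move=> k x; elim: k => [|k IH] //=.
  exact: Ht IH (Hs _).
have HA : 0 < A by have := ltn_ord i; lia.
have E : iter A.-1 (@sigma A) (sigma i) = i.
  apply: val_inj => /=.
  have := @iter_sigma A (sigma i) A.-1 ltac:(lia) => /= Hit.
  have := @sigmaE A i. have := ltn_ord i. have := ltn_ord (sigma i). lia.
by have := Hk A.-1 (sigma i); rewrite E.
Qed.

Lemma not_wo_no1 (A : nat) (t : pref A) :
  (forall i, t i <> s1) -> (exists i, t i = s0) -> ~ is_weak_order t.
Proof.
move=> H1 [i0 H0] [R [Htot [Htr Hre]]].
have Hs : forall i, R i (sigma i).
  move=> i; have := Hre i; have := H1 i.
  by case: (t i) => // _ [].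
have := @cyc A R (fun x => ltac:(by case: (Htot x x))) Htr Hs i0.
by have := Hre i0; rewrite H0 => -[].
Qed.

Lemma not_wo_no0 (A : nat) (t : pref A) :
  (forall i, t i <> s0) -> (exists i, t i = s1) -> ~ is_weak_order t.
Proof.
move=> H1 [i0 H0] [R [Htot [Htr Hre]]].
have Hs : forall i, R (sigma i) i.
  move=> i; have := Hre i; have := H1 i.
  by case: (t i) => // _ [].
have := @cyc A (fun x y => R y x) (fun x => ltac:(by case: (Htot x x)))
  (fun x y z a b => Htr _ _ _ b a) Hs i0.
by have := Hre i0; rewrite H0 => -[].
Qed.

Definition cond (A : nat) (h : 'I_A -> nat) (i : 'I_A) (v : sym) : Prop :=
  match v with
  | s0 => h i < h (sigma i)
  | s1 => h (sigma i) < h i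
  | se => h i = h (sigma i) end.

Lemma wo_of_height (A : nat) (t : pref A) (h : 'I_A -> nat) :
  (forall i, cond h i (t i)) -> is_weak_order t.
Proof.
move=> H; exists (fun x y => h x <= h y); split; [|split].
- move=> x y; case: (leqP (h x) (h y)) => H'; [left|right] => //; exact: ltnW.
- move=> x y z; exact: leq_trans.
- move=> i; have := H i; rewrite /cond; case: (t i) => Hi; lia.
Qed.

Definition flip (x : sym) := match x with s0 => s1 | s1 => s0 | se => se end.

Definition dd (A : nat) (j : 'I_A) (y : 'I_A) : nat :=
  let c0 := nat_of_ord (sigma (sigma j)) in
  if c0 <= y then y - c0 else y + A - c0.

Definition hh (A : nat) (j : 'I_A) (y : 'I_A) : nat :=
  if nat_of_ord y == nat_of_ord (sigma j) then 0 else (dd j y).+1.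

Lemma ddE (A : nat) (j y : 'I_A) :
  (sigma (sigma j) <= y /\ dd j y = y - sigma (sigma j)) \/
  (y < sigma (sigma j) /\ dd j y = y + A - sigma (sigma j)).
Proof. rewrite /dd /=; case: leqP => H; [left|right]; lia. Qed.

Lemma hhE (A : nat) (j y : 'I_A) :
  (nat_of_ord y = sigma j /\ hh j y = 0) \/
  (nat_of_ord y <> sigma j /\ hh j y = (dd j y).+1).
Proof. rewrite /hh; case: eqP => H; [left|right]; lia. Qed.

Section DD.
Variables (A : nat) (hA : 3 <= A) (j : 'I_A).

Lemma sj_ne : nat_of_ord j <> sigma j.
Proof. have := @sigmaE A j; have := ltn_ord j; lia. Qed.

Lemma ssj_ne : nat_of_ord (sigma (sigma j)) <> sigma j.
Proof. have := @sigmaE A (sigma j); have := ltn_ord (sigma j); lia. Qed.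

Lemma dd_j : dd j j = A - 2.
Proof.
have := @sigmaE A j; have := @sigmaE A (sigma j); have := @ddE A j j.
have := ltn_ord j; lia.
Qed.

Lemma dd_sj : dd j (sigma j) = A - 1.
Proof.
have := @sigmaE A j; have := @sigmaE A (sigma j); have := @ddE A j (sigma j).
have := ltn_ord j; lia.
Qed.

Lemma dd_ssj : dd j (sigma (sigma j)) = 0.
Proof.
have := @ddE A j (sigma (sigma j)); lia.
Qed.

Lemma dd_lt (y : 'I_A) : dd j y < A.
Proof.
have := @ddE A j y; have := ltn_ord y; have := ltn_ord (sigma (sigma j)); lia.
Qed.

Lemma dd_step (i : 'I_A) : nat_of_ord i <> j -> nat_of_ord i <> sigma j ->
  dd j (sigma i) = (dd j i).+1 /\ dd j i < A - 2.
Proof.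
move=> H1 H2.
have := @sigmaE A j; have := @sigmaE A (sigma j); have := @sigmaE A i.
have := @ddE A j i; have := @ddE A j (sigma i); have := ltn_ord i; have := ltn_ord j.
lia.
Qed.

Lemma sigma_ne (i : 'I_A) : nat_of_ord i <> j -> nat_of_ord (sigma i) <> sigma j.
Proof.
move=> H1; have := @sigmaE A j; have := @sigmaE A i; have := ltn_ord i; have := ltn_ord j.
lia.
Qed.

Lemma hh_sj : hh j (sigma j) = 0.
Proof. by rewrite /hh eqxx. Qed.

Lemma hh_other (y : 'I_A) : nat_of_ord y <> sigma j -> hh j y = (dd j y).+1.
Proof. by rewrite /hh => /eqP/negbTE ->. Qed.

End DD.

Lemma col_cases (A : nat) (P : sym -> Prop) (i j : 'I_A) b x :
  (i = j -> P b) -> (nat_of_ord i <> j -> i = sigma j -> P (flip b)) ->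
  (nat_of_ord i <> j -> nat_of_ord i <> sigma j -> P x) ->
  P (if i == j then b else if i == sigma j then flip b else x).
Proof.
move=> H1 H2 H3; case: (eqVneq i j) => [E|N1]; first exact: H1.
have N1' : nat_of_ord i <> j by move=> E; move/eqP: N1; apply; apply: val_inj.
case: (eqVneq i (sigma j)) => [E|N2]; first exact: H2.
apply: H3 => // E; move/eqP: N2; apply; apply: val_inj; exact E.
Qed.

Ltac col_case A hA j i :=
  apply: col_cases;
  [ move=> ->; rewrite /cond /=;
    have := @dd_j A hA j; have := @dd_sj A hA j; have := @hh_sj A j;
    have := @hh_other A j j (@sj_ne A hA j); have := @dd_lt A hA j j;
    have := @dd_lt A hA j (sigma j); lia
  | move=> _ ->; rewrite /cond /=;
    have := @dd_ssj A hA j; have := @dd_sj A hA j; have := @hh_sj A j;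
    have := @hh_other A j (sigma (sigma j)) (@ssj_ne A hA j);
    have := @dd_lt A hA j (sigma (sigma j)); have := @dd_lt A hA j (sigma j); lia
  | move=> H1 H2; rewrite /cond /=;
    have := @dd_step A hA j i H1 H2; have := @hh_other A j i H2;
    have := @hh_other A j (sigma i) (@sigma_ne A hA j i H1);
    have := @dd_lt A hA j i; have := @dd_lt A hA j (sigma i); lia ].

Lemma col_wo (A : nat) (hA : 3 <= A) (j : 'I_A) b x : binary b -> binary x ->
  is_weak_order (fun i => if i == j then b else if i == sigma j then flip b else x).
Proof.
case=> -> ; case=> ->.
- apply: (@wo_of_height _ _ (dd j)) => i; col_case A hA j i.
- apply: (@wo_of_height _ _ (fun y => 3 * A - hh j y)) => i; col_case A hA j i.
- apply: (@wo_of_height _ _ (fun y => hh j y)) => i; col_case A hA j i.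
- apply: (@wo_of_height _ _ (fun y => 3 * A - dd j y)) => i; col_case A hA j i.
Qed.

Lemma wo_ext (A : nat) (t t' : pref A) :
  (forall i, t i = t' i) -> is_weak_order t -> is_weak_order t'.
Proof.
move=> E [R [H1 [H2 H3]]]; exists R; split => //; split => // i.
by have := H3 i; rewrite E.
Qed.

Lemma ssj_ne_j (A : nat) (hA : 3 <= A) (j : 'I_A) :
  nat_of_ord (sigma (sigma j)) <> j.
Proof.
have := @sigmaE A j; have := @sigmaE A (sigma j); have := ltn_ord j; lia.
Qed.

Lemma neqF (A : nat) (i j : 'I_A) : nat_of_ord i <> j -> (i == j) = false.
Proof. by move=> H; apply/eqP => E; apply: H; rewrite E. Qed.

Theorem mainTheorem5 (A N : nat) (hA : 3 <= A) (hN : 2 <= N)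
    (w : profile A N -> pref A) (s : 'I_A -> ('I_N -> sym) -> sym) :
  IIA w s -> Unanimity s -> UnrestrictedDomain w ->
  forall (j : 'I_A) (r : 'I_N -> sym), (forall k, binary (r k)) -> binary (s j r).
Proof.
move=> HI HU HD j r Hr.
case Hsr: (s j r) => [||]; [by left | exfalso | by right].
pose c := fun k => flip (r k).
pose m (x : sym) : profile A N :=
  fun i => if i == j then r else if i == sigma j then c else (fun _ => x).
have Hp : forall x, binary x -> is_profile (m x).
  move=> x Hx k.
  apply: (wo_ext _ (col_wo hA j (Hr k) Hx)) => i /=.
  by rewrite /m; case: (i == j); case: (i == sigma j).
have i0j := neqF (ssj_ne_j hA (j := j)).
have i0sj := neqF (ssj_ne hA (j := j)).
have Hsj : (sigma j == j) = false.
  apply: neqF => E; exact: (sj_ne hA (j := j)) (esym E).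
have Hw : forall x i, binary x -> w (m x) i =
   (if i == j then se else if i == sigma j then s (sigma j) c else x).
  move=> x i Hx; rewrite (HI _ (Hp x Hx)) /m.
  case: eqP => [->|_]; first by rewrite Hsr.
  case: eqP => [->|_] //.
  by case: Hx => ->; case: (HU i).
have V1 : s (sigma j) c = s1.
  case E: (s (sigma j) c) => //; exfalso.
  - apply: (@not_wo_no1 A (w (m s0))); last first.
    + exact: HD (Hp s0 (or_introl erefl)).
    + exists (sigma (sigma j)); by rewrite Hw ?i0j ?i0sj //; left.
    + move=> i; rewrite Hw; last by left.
      by case: (i == j); case: (i == sigma j); rewrite ?E.
  - apply: (@not_wo_no1 A (w (m s0))); last first.
    + exact: HD (Hp s0 (or_introl erefl)).
    + exists (sigma (sigma j)); by rewrite Hw ?i0j ?i0sj //; left.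
    + move=> i; rewrite Hw; last by left.
      by case: (i == j); case: (i == sigma j); rewrite ?E.
have V0 : s (sigma j) c = s0.
  case E: (s (sigma j) c) => //; exfalso.
  - apply: (@not_wo_no0 A (w (m s1))); last first.
    + exact: HD (Hp s1 (or_intror erefl)).
    + exists (sigma (sigma j)); by rewrite Hw ?i0j ?i0sj //; right.
    + move=> i; rewrite Hw; last by right.
      by case: (i == j); case: (i == sigma j); rewrite ?E.
  - apply: (@not_wo_no0 A (w (m s1))); last first.
    + exact: HD (Hp s1 (or_intror erefl)).
    + exists (sigma (sigma j)); by rewrite Hw ?i0j ?i0sj //; right.
    + move=> i; rewrite Hw; last by right.
      by case: (i == j); case: (i == sigma j); rewrite ?E.
by rewrite V1 in V0.
Qed.
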